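(* Let $a,d,b,k\in\mathbb{P}$ with $\gcd(a,d)=1$, $b\geq 2$ and $a\geq k-1$, and let $$A=\left(a,\ ba+d,\ b^2a+\tfrac{b^2-1}{b-1}d,\ \dots,\ b^ka+\tfrac{b^k-1}{b-1}d\right).$$ Then $$F(A)=\left((b-1)a-b+d+S_{a-1}\right)a-d,\qquad g(A)=\sum_{r=1}^{a-1}S_r+\frac{(a-1)\big((b-1)a+d-1\big)}{2},$$ where $S_r=\sum_{i=1}^k x_i$ for $(x_1,\dots,x_k)$ the greedy presentation of $r$ (in particular $x_k=\lfloor (b-1)r/(b^k-1)\rfloor$).
   Context: $\mathbb{P}$ denotes the positive integers, $\mathbb{N}$ the nonnegative integers. $\langle A\rangle$ is the numerical semigroup of all $\mathbb{N}$-linear combinations of entries of $A$; $F(A)$ is the largest integer not in $\langle A\rangle$ and $g(A)$ is the number of positive integers not in $\langle A\rangle$. Let $B_i=\frac{b^i-1}{b-1}$. The greedy presentation of $r\in\mathbb{N}$ is the tuple $(x_1,\dots,x_k)\in\mathbb{N}^k$ with $\sum_i B_i x_i=r$ obtained by the greedy algorithm (take $x_k$ maximal, then $x_{k-1}$ maximal for the remainder, etc.); equivalently $x_k=\lfloor (b-1)r/(b^k-1)\rfloor$, $x_i\in\{0,\dots,b\}$ for $i\le k-1$, and if $2\le i\le k-1$ and $x_i=b$ then $x_1=\dots=x_{i-1}=0$. *)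

(* Defs.v *)
From mathcomp Require Import all_boot all_order all_algebra ssrint.
Import Order.TTheory GRing.Theory Num.Theory.
Set Implicit Arguments. Unset Strict Implicit. Unset Printing Implicit Defensive.

(* B_i = (b^i - 1)/(b - 1) = b^0 + ... + b^(i-1) *)
Definition Bn (b i : nat) : nat := \sum_(j < i) b ^ j.

Definition genA (a d b k : nat) : seq nat :=
  [seq b ^ i * a + Bn b i * d | i <- iota 0 k.+1].

Definition in_sg (A : seq nat) (z : int) : Prop :=
  exists c : seq nat, size c = size A /\
    z = Posz (\sum_(i < size A) nth 0 c i * nth 0 A i)%N.

Definition is_frobenius (A : seq nat) (f : int) : Prop :=
  ~ in_sg A f /\ (forall z : int, (f < z)%R -> in_sg A z).

Definition is_genus (A : seq nat) (g : nat) : Prop :=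
  exists s : seq nat, uniq s /\ size s = g /\
    (forall n : nat, n \in s <-> (0 < n)%N /\ ~ in_sg A (Posz n)).

Fixpoint greedy (b k r : nat) : seq nat :=
  match k with
  | 0 => [::]
  | k'.+1 => rcons (greedy b k' (r %% Bn b k)) (r %/ Bn b k)
  end.

Definition Sr (b k r : nat) : nat := sumn (greedy b k r).

(* Main.v *)
Require Import Defs.
From mathcomp Require Import all_boot all_order all_algebra ssrint.
From mathcomp Require Import zify.
Import GRing.Theory Num.Theory.

Section Comb.
Variable b : nat.
Hypothesis b1 : (1 <= b)%N.

Lemma Bn0 : Bn b 0 = 0. Proof. by rewrite /Bn big_ord0. Qed.
Lemma BnSr i : Bn b i.+1 = Bn b i + b ^ i. Proof. by rewrite /Bn big_ord_recr. Qed.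
Lemma BnS i : Bn b i.+1 = b * Bn b i + 1.
Proof.
elim: i => [|i IH]; first by rewrite BnSr Bn0 muln0 expn0.
move: IH; rewrite (BnSr i.+1) (BnSr i) expnS; nia.
Qed.
Lemma Bn1 : Bn b 1 = 1. Proof. by rewrite BnS Bn0 muln0. Qed.
Lemma Bn_gt0 i : (0 < Bn b i.+1)%N. Proof. rewrite BnS; lia. Qed.
Lemma expB i : b ^ i = (b - 1) * Bn b i + 1.
Proof.
elim: i => [|i IH]; first by rewrite Bn0 muln0.
rewrite expnS IH BnS. nia.
Qed.

Lemma Sr0n n : Sr b 0 n = 0. Proof. by []. Qed.
Lemma SrS k n : Sr b k.+1 n = Sr b k (n %% Bn b k.+1) + n %/ Bn b k.+1.
Proof. by rewrite /Sr /= sumn_rcons. Qed.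
Lemma Sr1 n : Sr b 1 n = n.
Proof. by rewrite SrS Bn1 modn1 divn1. Qed.
Lemma Srn0 k : Sr b k 0 = 0.
Proof. elim: k => [|k IH] //; by rewrite SrS mod0n div0n IH. Qed.

Lemma SraddB k n c : Sr b k.+1 (c * Bn b k.+1 + n) = Sr b k.+1 n + c.
Proof.
rewrite !SrS modnMDl divnMDl ?Bn_gt0 //; lia.
Qed.

Lemma Sr_top k : (Sr b k (Bn b k.+1 - 1) <= b)%N.
Proof.
case: k => [|k]; first by rewrite Sr0n.
have -> : Bn b k.+2 - 1 = b * Bn b k.+1 + 0 by rewrite BnS; lia.
by rewrite SraddB Srn0.
Qed.

Lemma G2 k n : (Sr b k n <= Sr b k n.+1 + (b - 1))%N.
Proof.
elim: k n => [|k IH] n; first by rewrite !Sr0n.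
have hB := Bn_gt0 k.
rewrite (divn_eq n (Bn b k.+1)).
set q := n %/ _; set r := n %% _.
have hr : (r < Bn b k.+1)%N by rewrite ltn_pmod.
rewrite -addnS !SraddB.
case: (ltnP r.+1 (Bn b k.+1)) => h.
  rewrite !SrS !modn_small ?divn_small //; have := IH r; lia.
have e : r.+1 = 1 * Bn b k.+1 + 0 by lia.
rewrite e SraddB Srn0 SrS (modn_small hr) (divn_small hr) addn0.
have -> : r = Bn b k.+1 - 1 by lia.
have := Sr_top k; lia.
Qed.

Lemma G3 k n : (0 < k)%N -> (Sr b k n + 1 <= Sr b k (n + Bn b k.+1))%N.
Proof.
case: k => [|k] // _.
rewrite (BnS k.+1) addnA addn1.
have := G2 k.+1 (n + b * Bn b k.+1).
rewrite !(addnC n (b * Bn b k.+1)) SraddB addn1; lia.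
Qed.

Lemma G3iter k n j : (0 < k)%N -> (Sr b k n + j <= Sr b k (n + j * Bn b k.+1))%N.
Proof.
move=> hk; elim: j => [|j IH]; first by rewrite mul0n addn0 addn0.
have := G3 k (n + j * Bn b k.+1) hk.
rewrite mulSn (addnC (Bn b k.+1)) addnA; lia.
Qed.

Lemma G4 k c M : (0 < k)%N -> (Sr b k.+1 (c * Bn b k.+1 + M) <= c + Sr b k M)%N.
Proof.
move=> hk; rewrite SraddB SrS.
have := G3iter k (M %% Bn b k.+1) (M %/ Bn b k.+1) hk.
rewrite [M %% _ + _ * _]addnC -divn_eq; lia.
Qed.

Lemma OPT k (c : nat -> nat) : (0 < k)%N ->
  (Sr b k (\sum_(i < k) c i * Bn b i.+1) <= \sum_(i < k) c i)%N.
Proof.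
case: k => [|k] // _.
elim: k => [|k IH].
  by rewrite !big_ord1 Bn1 muln1 Sr1.
rewrite big_ord_recr /= [X in _ <= X]big_ord_recr /= addnC.
apply: leq_trans (G4 _ _ _ _) _ => //. by rewrite addnC leq_add2r.
Qed.

Lemma size_greedy k n : size (greedy b k n) = k.
Proof. by elim: k n => [|k IH] n //=; rewrite size_rcons IH. Qed.

Lemma greedyS k n : greedy b k.+1 n = rcons (greedy b k (n %% Bn b k.+1)) (n %/ Bn b k.+1).
Proof. by []. Qed.

Lemma REP k n : (0 < k)%N ->
  \sum_(i < k) nth 0 (greedy b k n) i * Bn b i.+1 = n.
Proof.
case: k => [|k] // _.
elim: k n => [|k IH] n.
  by rewrite big_ord1 /= Bn1 muln1 divn1.
rewrite big_ord_recr greedyS.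
set s := greedy b k.+1 _. have hs : size s = k.+1 by rewrite size_greedy.
rewrite /=.
under eq_bigr => i _ do rewrite nth_rcons hs ltn_ord.
rewrite nth_rcons hs ltnn eqxx /s IH.
by rewrite addnC -divn_eq.
Qed.

Lemma REPsum k n : \sum_(i < k) nth 0 (greedy b k n) i = Sr b k n.
Proof.
elim: k n => [|k IH] n; first by rewrite big_ord0.
rewrite big_ord_recr greedyS.
set s := greedy b k _. have hs : size s = k by rewrite size_greedy.
rewrite /=.
under eq_bigr => i _ do rewrite nth_rcons hs ltn_ord.
by rewrite nth_rcons hs ltnn eqxx /s IH SrS.
Qed.

Lemma Sr_le k n : (0 < k)%N -> (Sr b k n <= n)%N.
Proof.
move=> hk.
have := OPT k (fun i => if i == 0 then n else 0) hk.
case: k hk => [|k] // _.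
rewrite !big_ord_recl /= Bn1 muln1 !big1 // ?addn0 // => i _.
Qed.

End Comb.

Lemma uniq_flatten_key (T : eqType) (l : seq nat) (f : nat -> seq T) (kf : T -> nat) :
  uniq l -> (forall x, x \in l -> uniq (f x)) ->
  (forall x y, x \in l -> y \in f x -> kf y = x) -> uniq (flatten [seq f x | x <- l]).
Proof.
elim: l => [|x l IH] //= /andP [hx hl] hu hk.
rewrite cat_uniq hu ?mem_head // IH //; last first.
  by move=> z y hz; apply: hk; rewrite in_cons hz orbT.
  by move=> z hz; apply: hu; rewrite in_cons hz orbT.
rewrite andbT; apply/hasPn => y /flatten_mapP [x' hx' hy]; apply/negP => hyx.
have e1 := hk x y (mem_head _ _) hyx.
have e2 : kf y = x' by apply: hk => //; rewrite in_cons hx' orbT.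
by move: hx; rewrite -e1 e2 hx'.
Qed.

Lemma tri n : 2 * \sum_(0 <= i < n) i = n * (n - 1).
Proof.
elim: n => [|n IH]; first by rewrite big_geq.
rewrite big_nat_recr //= mulnDr IH; case: n {IH} => [|n] //; nia.
Qed.

Section Sg.
Variables a d b k e : nat.
Hypotheses (ha : (0 < a)%N) (hd : (0 < d)%N) (hb : (2 <= b)%N) (hk : (0 < k)%N)
  (cop : coprime a d) (he : d * e = 1 %[mod a]).

Let b1 : (1 <= b)%N. Proof. lia. Qed.

Definition gen i := b ^ i * a + Bn b i * d.
Definition w R := a * ((b - 1) * R + Sr b k R) + d * R.
Definition key n := (n * e) %% a.

Lemma size_genA : size (genA a d b k) = k.+1.
Proof. by rewrite /genA size_map size_iota. Qed.

Lemma nth_genA i : (i < k.+1)%N -> nth 0 (genA a d b k) i = gen i.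
Proof.
move=> hi; rewrite /genA (nth_map 0) ?size_iota // nth_iota //.
Qed.

Lemma decomp (c : seq nat) :
  \sum_(i < k.+1) nth 0 c i * gen i =
  a * (nth 0 c 0 + (b - 1) * (\sum_(i < k) nth 0 c i.+1 * Bn b i.+1)
        + \sum_(i < k) nth 0 c i.+1)
  + d * (\sum_(i < k) nth 0 c i.+1 * Bn b i.+1).
Proof.
rewrite big_ord_recl.
rewrite (eq_bigr (fun i : 'I_k => a * ((b-1) * (nth 0 c i.+1 * Bn b i.+1) + nth 0 c i.+1) + d * (nth 0 c i.+1 * Bn b i.+1))); last first.
  move=> i _; rewrite lift0 /gen (expB _ b1); nia.
rewrite big_split /= -!big_distrr /= big_split /= -big_distrr /=.
rewrite /gen Bn0 expn0; nia.
Qed.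

Lemma in_w R j : in_sg (genA a d b k) (Posz (w R + j * a)).
Proof.
exists (j :: greedy b k R); split; first by rewrite size_genA /= size_greedy.
congr Posz; rewrite size_genA.
rewrite (eq_bigr (fun i : 'I_k.+1 => nth 0 (j :: greedy b k R) i * gen i)); last first.
  by move=> i _; rewrite nth_genA.
rewrite decomp /= REP // REPsum /w; nia.
Qed.

Lemma mod_cancel x y : d * x = d * y %[mod a] -> x = y %[mod a].
Proof.
wlog hxy : x y / (x <= y)%N.
  move=> H h; case: (leqP x y) => h'; first exact: H.
  by apply/esym/H; [lia | apply/esym].
move=> /eqP h; apply/eqP; rewrite eq_sym eqn_mod_dvd //.
by rewrite eq_sym eqn_mod_dvd ?leq_mul2l ?hxy ?orbT // -mulnBr Gauss_dvdr in h.
Qed.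

Lemma wmod R : w R = d * R %[mod a].
Proof. by rewrite /w mulnC modnMDl. Qed.

Lemma key_lt n : (key n < a)%N.
Proof. by rewrite ltn_pmod. Qed.

Lemma key_mod n : d * key n = n %[mod a].
Proof.
rewrite /key modnMmr mulnCA -modnMmr he modnMmr muln1 //.
Qed.

Lemma key_of n R : (R < a)%N -> n = d * R %[mod a] -> key n = R.
Proof.
move=> hR h; rewrite /key -modnMml h modnMml mulnC mulnA -modnMml (mulnC e) he.
by rewrite modnMml mul1n modn_small.
Qed.

Lemma LB (c : seq nat) R n : (R < a)%N ->
  \sum_(i < k.+1) nth 0 c i * gen i = n -> n = d * R %[mod a] -> (w R <= n)%N.
Proof.
move=> hR; rewrite decomp.
set R' := \sum_(i < k) _ * _. set P := \sum_(i < k) _. set c0 := nth 0 c 0.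
move=> <- hmod.
have hopt : (Sr b k R' <= P)%N by apply: (OPT b b1 k (fun i => nth 0 c i.+1)).
have hc : R' = R %[mod a].
  apply: mod_cancel; rewrite -hmod; by rewrite (mulnC a) modnMDl.
have hRs := Sr_le b b1 k R hk.
case: (ltnP R' a) => hR'.
  have eR : R' = R by rewrite -(modn_small hR') hc modn_small.
  rewrite /w -eR leq_add2r leq_mul2l; apply/orP; right; lia.
have hR2 : (R + a <= R')%N.
  have := divn_eq R' a; rewrite hc (modn_small hR).
  have : (0 < R' %/ a)%N by rewrite divn_gt0.
  set q := R' %/ a => hq.
  have : (a <= q * a)%N by rewrite leq_pmull.
  lia.
have h1 : ((b-1)*(R+a) <= (b-1)*R')%N by rewrite leq_mul2l hR2 orbT.
have h2 : (a <= (b-1)*a)%N by rewrite leq_pmull //; lia.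
rewrite mulnDr in h1.
rewrite /w; apply: leq_add.
  rewrite leq_mul2l; apply/orP; right; lia.
by rewrite leq_mul2l (leq_trans _ hR2) ?leq_addr ?orbT.
Qed.

Lemma in_sg_nat n : in_sg (genA a d b k) (Posz n) <-> (w (key n) <= n)%N.
Proof.
split.
  case=> c [_ h]; move: h; rewrite size_genA => -[h].
  apply: (LB c (key n) n (key_lt n)); last by rewrite key_mod.
  rewrite h; apply: eq_bigr => i _; by rewrite nth_genA.
move=> h.
have hm : n = w (key n) %[mod a] by rewrite wmod key_mod.
have : a %| n - w (key n) by rewrite -eqn_mod_dvd // hm.
move=> /divnK hj.
have -> : n = w (key n) + (n - w (key n)) %/ a * a by rewrite hj; lia.
exact: in_w.
Qed.

Lemma mod_gap x y : (x < y)%N -> x = y %[mod a] -> (x + a <= y)%N.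
Proof.
move=> hxy hm.
have : a %| y - x by rewrite -eqn_mod_dvd ?hm // ltnW.
move=> /dvdn_leq; lia.
Qed.

Lemma w_mono R R' : (R <= R')%N -> (w R <= w R')%N.
Proof.
move=> /subnK <-; elim: (R' - R) => [|m IH] //.
apply: leq_trans IH _.
have := G2 b b1 k (m + R); rewrite /w addSn => h.
apply: leq_add; last by rewrite leq_mul2l leqnSn orbT.
rewrite leq_mul2l mulnS; apply/orP; right; lia.
Qed.

Lemma w0 : w 0 = 0.
Proof. by rewrite /w Srn0 !muln0. Qed.

Lemma not_dvd R : (0 < R < a)%N -> ~~ (a %| d * R).
Proof.
move=> /andP [h1 h2]; rewrite Gauss_dvdr //.
apply/negP => /dvdn_leq; lia.
Qed.

Definition gapsR R := [seq w R - j * a | j <- iota 1 (w R %/ a)].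
Definition gaps := flatten [seq gapsR R | R <- iota 0 a].

Lemma sub_mod y j : (j * a <= y)%N -> y - j * a = y %[mod a].
Proof. move=> h; rewrite -(modnMDl j (y - j * a)) subnKC //. Qed.

Lemma gaps_uniq : uniq gaps.
Proof.
apply: (@uniq_flatten_key _ _ _ key); first exact: iota_uniq.
  move=> R _; rewrite map_inj_in_uniq ?iota_uniq //.
  move=> j j' /[!mem_iota] hj hj' h.
  have hj1 : (j * a <= w R)%N by rewrite -leq_divRL //; lia.
  have hj2 : (j' * a <= w R)%N by rewrite -leq_divRL //; lia.
  apply/eqP; rewrite -(eqn_pmul2r ha); apply/eqP; lia.
move=> R y /[!mem_iota] hR /mapP [j /[!mem_iota] hj ->].
have hj1 : (j * a <= w R)%N by rewrite -leq_divRL //; lia.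
apply: key_of; first lia.
by rewrite sub_mod // wmod.
Qed.

Lemma mem_gaps n : n \in gaps <-> (0 < n)%N /\ ~ in_sg (genA a d b k) (Posz n).
Proof.
rewrite in_sg_nat; split.
  move=> /flatten_mapP [R /[!mem_iota] hR /mapP [j /[!mem_iota] hj ->]].
  have hj1 : (j * a <= w R)%N by rewrite -leq_divRL //; lia.
  have hk' : key (w R - j * a) = R by apply: key_of; [lia | rewrite sub_mod // wmod].
  rewrite hk'.
  case: (posnP R) => hR0.
    by move: hj; rewrite hR0 w0 div0n; lia.
  have hnd : ~~ (a %| d * R) by apply: not_dvd; lia.
  have hne : j * a != w R.
    apply/negP => /eqP hE; move: hnd; rewrite /dvdn -wmod -hE modnMl //.
  split; [lia | move=> h; have : (0 < j * a)%N by rewrite muln_gt0; lia].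
  lia.
move=> [hn hns].
have hlt : (n < w (key n))%N by lia.
set R := key n.
have hm : n = w R %[mod a] by rewrite wmod key_mod.
have hga := @mod_gap n (w R) hlt hm.
have : a %| w R - n by rewrite -eqn_mod_dvd ?hm // ltnW.
move=> /divnK hj.
apply/flatten_mapP; exists R; first by rewrite mem_iota /= add0n key_lt.
apply/mapP; exists ((w R - n) %/ a); last by rewrite hj; lia.
rewrite mem_iota; apply/andP; split.
  rewrite divn_gt0 //; lia.
rewrite add1n ltnS leq_divRL // hj; lia.
Qed.

Lemma size_gaps : size gaps = \sum_(0 <= R < a) w R %/ a.
Proof.
rewrite size_flatten /shape -map_comp sumnE big_map /index_iota subn0.
apply: eq_bigr => R _; by rewrite /= size_map size_iota.
Qed.

Lemma wdiv R : w R %/ a = (b - 1) * R + Sr b k R + (d * R) %/ a.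
Proof. by rewrite /w (mulnC a) divnMDl. Qed.

Lemma floor_pair R : (0 < R < a)%N -> (d * R) %/ a + (d * (a - R)) %/ a = d - 1.
Proof.
move=> hR.
have hsum : d * R + d * (a - R) = d * a by rewrite -mulnDr subnKC //; lia.
have hx : (d * R) %% a != 0 by have := @not_dvd R hR; rewrite /dvdn.
have hm : ((d * R) %% a + (d * (a - R)) %% a) %% a = 0 by rewrite modnDm hsum modnMl.
have hge : (a <= (d * R) %% a + (d * (a - R)) %% a)%N.
  rewrite leqNgt; apply/negP => hlt; move: hm; rewrite modn_small //.
  move: hx; lia.
have := divnD (d * R) (d * (a - R)) ha.
rewrite hsum mulnK // hge; lia.
Qed.

Lemma floor_sum : 2 * \sum_(0 <= R < a) (d * R) %/ a = (a - 1) * (d - 1).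
Proof.
rewrite big_ltn // muln0 div0n add0n mul2n -addnn.
rewrite [X in _ + X](big_nat_rev) -big_split /=.
rewrite (eq_big_nat _ _ (F2 := fun _ => d - 1)) ?sum_nat_const_nat ?subn1 //.
move=> i hi; rewrite -subn1 -(@floor_pair i hi).
by have -> : 1 + a - i.+1 = a - i by lia.
Qed.

End Sg.
Local Open Scope ring_scope.

Theorem theorem3p5 (a d b k : nat) :
  (0 < a)%N -> (0 < d)%N -> (0 < b)%N -> (0 < k)%N ->
  coprime a d -> (2 <= b)%N -> (k.-1 <= a)%N ->
  is_frobenius (genA a d b k)
    ((((b - 1) * a)%:Z - b%:Z + d%:Z + (Sr b k (a - 1))%:Z) * a%:Z - d%:Z)%R /\
  is_genus (genA a d b k)
    ((\sum_(1 <= r < a) Sr b k r) + (a - 1) * ((b - 1) * a + d - 1) %/ 2)%N.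
Proof.
move=> ha hd hb0 hk cop hb _.
have [e he] : exists e, (d * e = 1 %[mod a])%N.
  case: (egcdnP a hd) => km kn h _.
  exists km; rewrite mulnC h.
  have -> : gcdn d a = 1%N by rewrite gcdnC; apply/eqP.
  by rewrite modnMDl.
have insg := in_sg_nat a d b k e ha hd hb hk cop he.
have wmono := w_mono a d b k e ha hd hb hk cop he.
have mgap := mod_gap a d b k e ha hd hb hk cop he.
set W := w a d b k (a - 1).
have hF : ((((b - 1) * a)%:Z - b%:Z + d%:Z + (Sr b k (a - 1))%:Z) * a%:Z - d%:Z)
          = W%:Z - a%:Z.
  rewrite /W /w; move: (Sr b k (a - 1)) => S.
  case: a ha {insg wmono mgap W he cop} => [|a'] // _.
  case: b hb {hb0} => [|[|b']] // _.
  rewrite !subn1 /=; nia.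
have hW1 : (a <= W + 1)%N.
  have h1 : (a - 1 <= d * (a - 1))%N by rewrite leq_pmull.
  have h2 : (d * (a - 1) <= W)%N by rewrite /W /w leq_addl.
  lia.
rewrite hF; split; first split.
- move=> h.
  case: (ltnP 1 a) => ha2; last first.
    have a1 : a = 1%N by lia.
    move: h; rewrite /W a1 subnn w0 => -[c [_ hc]]; lia.
  have hWa : (a <= W)%N.
    rewrite /W /w; apply: leq_trans (leq_addr _ _).
    rewrite leq_pmulr // addn_gt0 muln_gt0; apply/orP; left; lia.
  have hh : W%:Z - a%:Z = Posz (W - a) by lia.
  rewrite hh in h; move: (proj1 (insg (W - a)%N) h).
  have -> : key a e (W - a)%N = (a - 1)%N.
    apply: (key_of a d e he); first lia.
    have := sub_mod a W 1; rewrite mul1n => /(_ hWa) ->.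
    by rewrite wmod.
  rewrite -/W; lia.
- move=> [n|m] hz; last by lia.
  apply/(proj2 (insg n)).
  have hwn : (w a d b k (key a e n) <= W)%N by apply: wmono; have := key_lt a e ha n; lia.
  have hnW : (W < n + a)%N by lia.
  rewrite leqNgt; apply/negP => hlt.
  have hm : (n = w a d b k (key a e n) %[mod a])%N by rewrite wmod key_mod.
  have := mgap _ _ hlt hm; lia.
exists (gaps a d b k); split; first exact: (gaps_uniq a d b k e ha hd hb hk cop he).
split; last exact: (mem_gaps a d b k e ha hd hb hk cop he).
rewrite size_gaps.
rewrite (eq_bigr (fun R => (b - 1) * R + Sr b k R + (d * R) %/ a)%N); last first.
  by move=> R _; rewrite (wdiv a d b k ha).
rewrite !big_split /= -big_distrr /=.
rewrite (@big_ltn _ 0%N addn 0%N a (Sr b k) ha) Srn0 add0n.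
have hT := tri a.
have hU := floor_sum a d b k e ha hd hb hk cop he.
move: (\sum_(0 <= i < a) i)%N hT => T hT.
move: (\sum_(0 <= R < a) (d * R) %/ a)%N hU => U hU.
have hX : ((a - 1) * ((b - 1) * a + d - 1) = 2 * ((b - 1) * T + U))%N.
  rewrite mulnDr mulnCA hT hU.
  have -> : ((b-1)*a + d - 1 = (b-1)*a + (d-1))%N by rewrite addnBA.
  move: (a - 1)%N (b - 1)%N (d - 1)%N => x y z; clear; nia.
rewrite hX mulKn //; lia.
Qed.
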